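(* Let $T=(V,E)$ be a binary $X$-tree and $x_1\neq x_2$ elements of $X$. If $P_{x_1}(T)\cap P_{x_2}(T)\neq\emptyset$, then every interior vertex of $T$ lies on the path from $x_1$ to $x_2$ in $T$ (so $T$ is a caterpillar tree with $x_1,x_2$ at opposite ends).
   Context: Let $X$ be a finite set with $|X|=n\ge 3$. A binary $X$-tree is a finite tree $T=(V,E)$ whose degree-1 vertices are exactly the elements of $X$ and all of whose other (interior) vertices have degree $3$. A cord is a $2$-subset $\{y,z\}$ of $X$, written $yz$. For $x\in X$, $P_x(T)$ is the collection of all sets of the form $\{ax: a\in X-\{x\}\}\cup\{y_vz_v: v\in V-X\}$, where for each interior vertex $v$, $y_v$ and $z_v$ are leaves chosen from the two distinct connected components of $T-v$ that do not contain $x$ (one from each). A caterpillar tree is a binary $X$-tree all of whose interior vertices lie on a single path. *)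

(* Defs.v *)
From mathcomp Require Import all_boot.
Set Implicit Arguments. Unset Strict Implicit. Unset Printing Implicit Defensive.

Definition simple_graph (V : finType) (e : rel V) : Prop :=
  symmetric e /\ irreflexive e.

Definition deg (V : finType) (e : rel V) (v : V) : nat := #|[set w | e v w]|.

Definition connected (V : finType) (e : rel V) : Prop :=
  forall u w : V, connect e u w.

Definition acyclic (V : finType) (e : rel V) : Prop :=
  forall p : seq V, uniq p -> 3 <= size p -> ~~ cycle e p.

Definition is_tree (V : finType) (e : rel V) : Prop :=
  [/\ simple_graph e, connected e & acyclic e].

Definition binary_X_tree (V : finType) (e : rel V) (X : {set V}) : Prop :=
  [/\ is_tree e,
      (forall v, (v \in X) = (deg e v == 1)) &
      (forall v, v \notin X -> deg e v = 3)].

Definition del_vertex (V : finType) (e : rel V) (v : V) : rel V :=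
  [rel a b | [&& a != v, b != v & e a b]].

(* valid cord choice (y_v, z_v) at interior vertex v w.r.t. x:
   leaves from two distinct components of T - v not containing x *)
Definition cord_choice (V : finType) (e : rel V) (X : {set V}) (x v y z : V)
  : Prop :=
  [/\ y \in X, z \in X,
      ~~ connect (del_vertex e v) y z,
      ~~ connect (del_vertex e v) y x &
      ~~ connect (del_vertex e v) z x].

(* C \in P_x(T); cords yz are represented as 2-element sets [set y; z] *)
Definition in_Px (V : finType) (e : rel V) (X : {set V}) (x : V)
  (C : {set {set V}}) : Prop :=
  exists y z : V -> V,
    (forall v, v \notin X -> cord_choice e X x v (y v) (z v)) /\
    C = [set [set a; x] | a in X :\ x] :|: [set [set y v; z v] | v in ~: X].

Definition on_path (V : finType) (e : rel V) (u u' w : V) : Prop :=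
  exists p : seq V, [/\ path e u p, last u p = u', uniq (u :: p) &
                        w \in u :: p].

(* Main.v *)
Require Import Defs.
From mathcomp Require Import all_boot.
From mathcomp Require Import zify.
Set Implicit Arguments. Unset Strict Implicit. Unset Printing Implicit Defensive.
Section Forest.
Variables (V : finType) (e : rel V).
Hypotheses (esym : symmetric e) (eirr : irreflexive e).

Lemma cycle_close (S : {set V}) u rest :
  1 < #|[set w in S | e u w]| -> uniq (u :: rest) -> path e u rest ->
  (forall w, w \in S -> e u w -> w \in u :: rest) ->
  exists p, [/\ uniq p, 3 <= size p & cycle e p].
Proof.
move=> /card_gt1P[a [b [aS bS ab]]] Hu Hp Hn.
move: aS bS; rewrite !inE => /andP[aS ea] /andP[bS eb].
have ar : a \in rest.
  move: (Hn a aS ea); rewrite inE => /orP[/eqP Eau|//]; by rewrite Eau eirr in ea.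
have br : b \in rest.
  move: (Hn b bS eb); rewrite inE => /orP[/eqP Eau|//]; by rewrite Eau eirr in eb.
have [w [wr euw wh]] : exists w, [/\ w \in rest, e u w & w != head u rest].
  case: (eqVneq a (head u rest)) => [Ha|Ha]; last by exists a.
  exists b; split => //; rewrite -Ha eq_sym //.
case/splitPr: wr Hu Hp wh => r1 r2 Hu Hp wh.
exists (u :: rcons r1 w); split.
- move: Hu; have -> : u :: r1 ++ w :: r2 = (u :: rcons r1 w) ++ r2.
    by rewrite /= -cats1 -catA.
  by rewrite cat_uniq => /andP[].
- case: r1 wh {Hu Hp} => [|x r1] /=; first by rewrite eqxx.
  by rewrite size_rcons.
- rewrite /= rcons_path last_rcons (esym w u) euw andbT.
  move: Hp; rewrite cat_path => /andP[H1 /=] /andP[ewl _].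
  by rewrite rcons_path H1 ewl.
Qed.

Lemma cycle_aux (S : {set V}) :
  (forall v, v \in S -> 1 < #|[set w in S | e v w]|) ->
  forall n u rest, #|V| - size (u :: rest) <= n -> uniq (u :: rest) ->
  all (mem S) (u :: rest) -> path e u rest ->
  exists p, [/\ uniq p, 3 <= size p & cycle e p].
Proof.
move=> Hd; elim=> [|n IH] u rest Hn Hu Hall Hp;
  have uS : u \in S by move: Hall => /andP[].
all: case: (pickP [pred w | [&& w \in S, e u w & w \notin u :: rest]]) =>
  [w /and3P[wS euw wn] | H]; last first.
1,3: apply: (cycle_close (Hd u uS) Hu Hp) => w wS euw;
  by move: (H w) => /=; rewrite wS euw /=; case: (w \in _).
- have : uniq (w :: u :: rest) by rewrite cons_uniq wn Hu.
  move/card_uniqP => Hc; have := max_card (mem (w :: u :: rest)).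
  rewrite Hc /= in Hn *; lia.
- apply: (IH w (u :: rest)).
  + move: Hn => /=; lia.
  + by rewrite cons_uniq wn Hu.
  + by rewrite /= wS.
  + by rewrite /= (esym w u) euw.
Qed.

Definition dS (S : {set V}) v := #|[set w in S | e v w]|.

Lemma forest_bound (ac : forall p : seq V, uniq p -> 3 <= size p -> ~~ cycle e p) :
  forall n (S : {set V}), #|S| <= n -> S != set0 -> \sum_(v in S) dS S v + 2 <= 2 * #|S|.
Proof.
elim=> [|n IH] S Hn HS.
  by move: HS; rewrite -card_gt0; lia.
have [[l lS dl] | Hall] : (exists2 l, l \in S & dS S l <= 1) \/ (forall v, v \in S -> 1 < dS S v).
  case: (pickP [pred v | (v \in S) && (dS S v <= 1)]) => [l /andP[]|H]; first by left; exists l.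
  right => v vS; move: (H v) => /=; rewrite vS /=; lia.
- set S' := S :\ l.
  have HS1 : #|S| = #|S'| + 1 by rewrite (cardsD1 l S) lS addnC.
  have Hsum : \sum_(v in S) dS S v = \sum_(v in S') dS S' v + 2 * dS S l.
    rewrite (bigD1 l lS) /=.
    have -> : \sum_(i in S | i != l) dS S i = \sum_(i in S') (dS S' i + (e i l : nat)).
      apply: eq_big => [i|i]; first by rewrite in_setD1 andbC.
      move=> /andP[iS _]; rewrite /dS (cardsD1 l [set w in S | e i w]) !inE lS /=.
      rewrite addnC; congr (_ + _); apply: eq_card => w; by rewrite !inE andbA.
    rewrite big_split /=.
    have -> : \sum_(i in S') (e i l : nat) = dS S l.
      transitivity (\sum_(i in S' | e i l) 1).
        by rewrite big_mkcondr /=; apply: eq_bigr => i _; case: (e i l).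
      rewrite sum1_card /dS; apply: eq_card => w; rewrite !inE esym.
      rewrite unfold_in /= in_setD1.
      by case: (eqVneq w l) => [->|]; rewrite ?eirr ?andbF.
    lia.
  case: (eqVneq S' set0) => [E|ne].
    have Hd0 : dS S l = 0.
      apply/eqP; rewrite cards_eq0; apply/eqP/setP => w; rewrite !inE.
      case: (eqVneq w l) => [->|wl]; first by rewrite eirr andbF.
      have : w \notin S' by rewrite E inE.
      by rewrite !inE wl /= => /negbTE ->.
    rewrite Hsum Hd0 E big_set0 HS1 E cards0; lia.
  have Hn' : #|S'| <= n by move: Hn; rewrite HS1; lia.
  have := IH S' Hn' ne. rewrite Hsum; lia.
- exfalso; move: HS => /set0Pn[v vS].
  have allS : all (mem S) [:: v] by rewrite /= vS.
  have [p [up sp cp]] := @cycle_aux S Hall #|V| v [::] (leq_subr _ _) isT allS isT.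
  by move: (ac p up sp); rewrite cp.
Qed.
End Forest.

Lemma count_interior (V : finType) (e : rel V) (X : {set V}) :
  binary_X_tree e X -> (exists x, x \in X) -> #|~: X| + 2 <= #|X|.
Proof.
move=> [[[es ei] _ ac] h1 h3] [x xX].
have ne : [set: V] != set0 by apply/set0Pn; exists x.
have := forest_bound es ei ac (leqnn _) ne.
have -> : \sum_(v in [set: V]) dS e [set: V] v = #|X| + 3 * #|~: X|.
  rewrite (bigID (fun v => v \in X)) /=.
  have -> : \sum_(i in [set: V] | i \in X) dS e [set: V] i = \sum_(i in [set: V] | i \in X) 1.
    apply: eq_bigr => i /andP[_ iX].
    have := h1 i; rewrite iX => /esym/eqP <-.
    by apply: eq_card => w; rewrite !inE.
  have -> : \sum_(i in [set: V] | i \notin X) dS e [set: V] i = \sum_(i in [set: V] | i \notin X) 3.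
    apply: eq_bigr => i /andP[_ iX].
    rewrite -(h3 i iX); by apply: eq_card => w; rewrite !inE.
  rewrite !sum_nat_const mulnC mul1n (mulnC _ 3); congr (_ + 3 * _); apply: eq_card => w;
    by rewrite unfold_in /= !inE.
have := cardsC X; rewrite cardsT; lia.
Qed.

Lemma path_del (V : finType) (e : rel V) v x p :
  path e x p -> v \notin x :: p -> path (del_vertex e v) x p.
Proof.
elim: p x => [|y p IH] x //= /andP[exy Hp]; rewrite !inE negb_or => /andP[vx].
rewrite negb_or => /andP[vy vp].
rewrite IH ?inE ?negb_or ?vy // andbT /=.
by rewrite /del_vertex /= eq_sym vx eq_sym vy exy.
Qed.

Theorem mainTheorem5 (V : finType) (e : rel V) (X : {set V})
  (x1 x2 : V) :
  binary_X_tree e X -> 3 <= #|X| ->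
  x1 \in X -> x2 \in X -> x1 != x2 ->
  (exists C : {set {set V}}, in_Px e X x1 C /\ in_Px e X x2 C) ->
  forall v : V, v \notin X -> on_path e x1 x2 v.
Proof.
move=> HT _ x1X x2X x12 [C [[y1 [z1 [Hc1 HC1]]] [y2 [z2 [Hc2 HC2]]]]] v vX.
have [[[es ei] conn ac] h1 h3] := HT.
set Sep := [set w | (w \notin X) && ~~ connect (del_vertex e w) x1 x2].
set g := fun w => if y2 w == x1 then z2 w else y2 w.
have sub : X :\ x1 :\ x2 \subset g @: Sep.
  apply/subsetP => a; rewrite !inE => /and3P[a2 a1 aX].
  have : [set a; x1] \in C.
    rewrite HC1 inE; apply/orP; left; apply/imsetP; exists a => //.
    by rewrite !inE a1 aX.
  rewrite HC2 inE => /orP[/imsetP[b _ Eb]| /imsetP[w wX Ew]].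
  - have : x2 \in [set a; x1] by rewrite Eb !inE eqxx orbT.
    by rewrite !inE eq_sym (negbTE a2) eq_sym (negbTE x12).
  - rewrite inE in wX; have [_ _ _ nyx nzx] := Hc2 w wX.
    have x1in : x1 \in [set y2 w; z2 w] by rewrite -Ew !inE eqxx orbT.
    have ain : a \in [set y2 w; z2 w] by rewrite -Ew !inE eqxx.
    apply/imsetP; exists w.
    + rewrite inE wX /=.
      by move: x1in; rewrite !inE => /orP[/eqP E|/eqP E]; rewrite E.
    + rewrite /g; case: eqP => [E|NE].
      * by move: ain; rewrite !inE E (negbTE a1) /= => /eqP.
      * move: x1in; rewrite !inE => /orP[/eqP E|/eqP E]; first by move: NE; rewrite E.
        by move: ain; rewrite !inE -E (negbTE a1) orbF => /eqP.
have card1 : #|X :\ x1 :\ x2| + 2 = #|X|.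
  rewrite (cardsD1 x1 X) (cardsD1 x2 (X :\ x1)) !inE x1X x2X eq_sym x12 /=; lia.
have cardI := count_interior HT (ex_intro _ x1 x1X).
have vSep : v \in Sep.
  apply/negPn/negP => nv.
  have : Sep \subset ~: X :\ v.
    apply/subsetP => w wS; rewrite !inE.
    have -> : w != v by apply/eqP => E; move: nv; rewrite -E wS.
    by move: wS; rewrite inE => /andP[].
  move/subset_leq_card; have := cardsD1 v (~: X); rewrite inE vX.
  have := leq_imset_card g Sep; have := subset_leq_card sub; lia.
move: vSep; rewrite inE => /andP[_ nc].
move: (conn x1 x2) => /connectP[p pp lp].
move: lp; case/shortenP: pp => p' pp' up' _ lp.
exists p'; split => //.
apply/negPn/negP => nvp; apply: (negP nc); apply/connectP; exists p' => //.
exact: path_del.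
Qed.
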